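(* Let $k$ be a positive integer, $a=6k+5$, $b=a+\frac{a-3}{2}$, $c=b+1$, $S=\{a,b,c\}$, $G=\langle S\rangle$. For $i\in[0,k]$ let $A_{i,k}=([a,a+3i]\cup[b,b+1+3i]\cup[2a,2a+3i])+\{2ib\}$, $B_{i,k}=([a,a+1+3i]\cup[b,b+3+3i]\cup[2a,2a+1+3i])+\{(2i+1)b\}$, $I_{i,k}=A_{i,k}\cup B_{i,k}$; let $C=[2a+2kb,\infty[$ and $H_{13,k}=\{0\}\cup\bigcup_{i=0}^{k}I_{i,k}\cup C$. Then: (1) $H_{13,k}$ is a co-finite submonoid of $G$ containing $S$; (2) $H_{13,k}$ is a $3$-permutation numerical semigroup.
   Context: $\mathbb{N}=\{0,1,2,\dots\}$. A numerical semigroup is a submonoid $G$ of $(\mathbb{N},+,0)$ with $\mathbb{N}\setminus G$ finite; $\langle S\rangle$ is the submonoid generated by $S$. Writing the elements of a numerical semigroup as $0=g_0<g_1<g_2<\cdots$, it is an $n$-permutation numerical semigroup if it is generated by $\{g_1,\dots,g_n\}$ and for every $k\in\mathbb{N}$ the tuple $(g_{kn+1}\bmod n,\dots,g_{kn+n}\bmod n)$ contains exactly one representative of each residue class mod $n$. Notation: $[u,v]=\{x\in\mathbb{N}:u\le x\le v\}$, $[u,\infty[=\{x\in\mathbb{N}:x\ge u\}$; $X+Y=\{x+y:x\in X,y\in Y\}$. *)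

(* Defs.v *)
From mathcomp Require Import all_boot.
Set Implicit Arguments. Unset Strict Implicit. Unset Printing Implicit Defensive.

Definition submonoid (H : nat -> Prop) : Prop :=
  H 0 /\ forall x y, H x -> H y -> H (x + y).

Definition cofinite (H : nat -> Prop) : Prop :=
  exists N, forall x, N <= x -> H x.

Definition numerical_semigroup (H : nat -> Prop) : Prop :=
  submonoid H /\ cofinite H.

Definition generated (S : nat -> Prop) : nat -> Prop :=
  fun x => forall M, submonoid M -> (forall s, S s -> M s) -> M x.

Definition enumerates (G : nat -> Prop) (g : nat -> nat) : Prop :=
  (forall i j, i < j -> g i < g j) /\ (forall x, G x <-> exists i, g i = x).

Definition perm_num_semigroup (n : nat) (G : nat -> Prop) : Prop :=
  numerical_semigroup G /\
  exists g : nat -> nat, enumerates G g /\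
    (forall x, G x <-> generated (fun s => exists2 j, 0 < j <= n & g j = s) x) /\
    (forall k, perm_eq [seq g (k * n + j) %% n | j <- iota 1 n] (iota 0 n)).

Definition in_shift (u v t x : nat) : bool := (u + t <= x) && (x <= v + t).

Definition a_of (k : nat) : nat := 6 * k + 5.
Definition b_of (k : nat) : nat := a_of k + (a_of k - 3) %/ 2.
Definition c_of (k : nat) : nat := b_of k + 1.

Definition S_of (k : nat) : nat -> Prop :=
  fun x => x = a_of k \/ x = b_of k \/ x = c_of k.

Definition A_ik (i k x : nat) : bool :=
  let a := a_of k in let b := b_of k in let t := 2 * i * b in
  [|| in_shift a (a + 3 * i) t x, in_shift b (b + 1 + 3 * i) t x
    | in_shift (2 * a) (2 * a + 3 * i) t x].

Definition B_ik (i k x : nat) : bool :=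
  let a := a_of k in let b := b_of k in let t := (2 * i + 1) * b in
  [|| in_shift a (a + 1 + 3 * i) t x, in_shift b (b + 3 + 3 * i) t x
    | in_shift (2 * a) (2 * a + 1 + 3 * i) t x].

Definition I_ik (i k x : nat) : bool := A_ik i k x || B_ik i k x.

Definition C_k (k x : nat) : bool := 2 * a_of k + 2 * k * b_of k <= x.

Definition H13 (k : nat) : nat -> Prop :=
  fun x => x = 0 \/ (exists2 i, i <= k & I_ik i k x) \/ C_k k x.

(* Main.v *)
Require Import Defs.
From mathcomp Require Import all_boot zify.
Set Implicit Arguments. Unset Strict Implicit. Unset Printing Implicit Defensive.

Definition Hb k x : bool := (x == 0) || has (fun i => I_ik i k x) (iota 0 k.+1) || C_k k x.

Lemma HbP k x : reflect (H13 k x) (Hb k x).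
Proof.
rewrite /Hb /H13; apply: (iffP idP).
- case/orP => [/orP[/eqP->|/hasP[i]]|->]; [by left| |by right;right].
  rewrite mem_iota add0n => hi hI; right; left; exists i => //.
- case=> [->//|[[i hi hI]|->]]; last by rewrite orbT.
  apply/orP; left; apply/orP; right; apply/hasP; exists i => //; rewrite mem_iota; lia.
Qed.

Lemma aE k : a_of k = 6*k+5. Proof. by []. Qed.
Lemma bE k : b_of k = 9*k+6. Proof. rewrite /b_of /a_of; lia. Qed.
Lemma cE k : c_of k = 9*k+7. Proof. rewrite /c_of bE; lia. Qed.

Definition Rb k i r : bool := (r <= 3*i) || ((3*k+1 <= r) && (r <= 3*k+2+3*i))
  || ((6*k+5 <= r) && (r <= 6*k+5+3*i)) || ((9*k+6 <= r) && (r <= 9*k+7+3*i))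
  || ((12*k+7 <= r) && (r <= 12*k+10+3*i)) || ((15*k+11 <= r) && (r <= 15*k+12+3*i)).
Definition Pb k i r : bool := (k < i) || ((i == k) && (6*k+5 <= r)) || ((i <= k) && Rb k i r).
Definition off k i := 6*k+5 + (18*k+12)*i.

Lemma mulf a b c : a < b -> a * c + c <= b * c.
Proof. move=> h; have := leq_mul h (leqnn c); lia. Qed.

Lemma IikE i k x : I_ik i k x =
  [|| (6*k+5 + 2*i*(9*k+6) <= x) && (x <= 6*k+5+3*i + 2*i*(9*k+6)),
      (9*k+6 + 2*i*(9*k+6) <= x) && (x <= 9*k+6+1+3*i + 2*i*(9*k+6)),
      (2*(6*k+5) + 2*i*(9*k+6) <= x) && (x <= 2*(6*k+5)+3*i + 2*i*(9*k+6)),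
      (6*k+5 + (2*i+1)*(9*k+6) <= x) && (x <= 6*k+5+1+3*i + (2*i+1)*(9*k+6)),
      (9*k+6 + (2*i+1)*(9*k+6) <= x) && (x <= 9*k+6+3+3*i + (2*i+1)*(9*k+6))
    | (2*(6*k+5) + (2*i+1)*(9*k+6) <= x) && (x <= 2*(6*k+5)+1+3*i + (2*i+1)*(9*k+6))].
Proof. by rewrite /I_ik /A_ik /B_ik /in_shift bE aE -!orbA. Qed.

Lemma CkE k x : C_k k x = (2*(6*k+5) + 2*k*(9*k+6) <= x).
Proof. by rewrite /C_k aE bE. Qed.

Lemma memb k i z : off k i <= z -> z < off k i + (18*k+12) -> Hb k z = Pb k i (z - off k i).
Proof.
move=> h1 h2; apply/idP/idP.
- rewrite /Hb => /orP[/orP[/eqP z0|/hasP[j]]|hC].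
  + rewrite /off in h1; lia.
  + rewrite mem_iota IikE => hj hI.
    have f1 : j < i -> j*k + k <= i*k by apply: mulf.
    have f2 : i < j -> i*k + k <= j*k by apply: mulf.
    have f3 : i = j -> i*k = j*k by move->.
    move: hI h1 h2; rewrite /Pb /Rb /off; lia.
  + have f1 : i < k -> i*k + k <= k*k by apply: mulf.
    have f2 : k < i -> k*k + k <= i*k by apply: mulf.
    have f3 : i = k -> i*k = k*k by move->.
    move: hC h1 h2; rewrite CkE /Pb /Rb /off; lia.
- rewrite /Pb => /orP[/orP[hk'| /andP[/eqP hik hr]] | /andP[hik hR]].
  + have f2 : k < i -> k*k + k <= i*k by apply: mulf.
    apply/orP; right; move: h1; rewrite CkE /off; lia.
  + subst; apply/orP; right; move: h1 hr; rewrite CkE /off; lia.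
  + apply/orP; left; apply/orP; right; apply/hasP; exists i; first by rewrite mem_iota; lia.
    move: hR h1 h2; rewrite IikE /Rb /off; lia.
Qed.

Lemma small k z : z < 6*k+5 -> Hb k z = (z == 0).
Proof.
move=> hz; apply/idP/idP; last by move/eqP->.
rewrite /Hb => /orP[/orP[//|/hasP[j _]]|].
- by rewrite IikE; lia.
- by rewrite CkE; lia.
Qed.

Lemma locate k z : 6*k+5 <= z -> exists i, (off k i <= z) && (z < off k i + (18*k+12)).
Proof.
move=> hz.
have hd : 0 < 18*k+12 by lia.
have e := divn_eq (z - (6*k+5)) (18*k+12).
have lt := ltn_pmod (z - (6*k+5)) hd.
exists ((z - (6*k+5)) %/ (18*k+12)); move: e lt; rewrite /off.
move: ((z - (6*k+5)) %/ (18*k+12)) ((z - (6*k+5)) %% (18*k+12)) => q r; lia.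
Qed.

Definition dcond k i r s := ((s <= r) && Pb k i (r - s)) || ((r < s) && (0 < i) && Pb k i.-1 (r + (18*k+12) - s))
   || ((r < s) && (i == 0) && (r + (6*k+5) == s)).

Ltac d1 s := exists s; [lia|apply/orP; left; apply/orP; left; apply/andP; split; [lia|rewrite /Pb /Rb; lia]].
Ltac d2 s := exists s; [lia|apply/orP; left; apply/orP; right; apply/andP; split; [lia|rewrite /Pb /Rb; lia]].
Ltac d3 s := exists s; [lia|apply/orP; right; lia].
Ltac d12 i s := case: (posnP i) => hi0; [subst i; d3 s | d2 s].

Lemma down_class k i r : 0 < k -> r < 18*k+12 -> Pb k i r ->
  exists2 s, (s == 6*k+5) || (s == 9*k+6) || (s == 9*k+7) & dcond k i r s.
Proof.
move=> hk hr; rewrite {1}/Pb {1}/Rb.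
case/orP=> [/orP[h|h]|h].
- case: (leqP (6*k+5) r) => e; [d1 (6*k+5)|d2 (6*k+5)].
- case: (leqP r (12*k+7)) => e; first by d1 (6*k+5).
  case: (leqP (12*k+10) r) => e'; [d1 (6*k+5)|d1 (9*k+6)].
case/andP: h => hik /orP[/orP[/orP[/orP[/orP[h|h]|h]|h]|h]|h].
- d12 i (6*k+5).
- case: (leqP r (3*k+1+3*i)) => e; [d12 i (9*k+6)|d12 i (9*k+7)].
- d1 (6*k+5).
- case: (leqP r (9*k+6+3*i)) => e; [d1 (9*k+6)|d1 (9*k+7)].
- case: (leqP r (12*k+8+3*i)) => e; first by d1 (9*k+6).
  case: (leqP r (12*k+9+3*i)) => e'; [d1 (9*k+7)|d1 (6*k+5)].
- d1 (6*k+5).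
Qed.

Lemma offS k i : off k i.+1 = off k i + (18*k+12).
Proof. rewrite /off; lia. Qed.
Lemma off0 k : off k 0 = 6*k+5.
Proof. rewrite /off; lia. Qed.
Lemma off3 k i : off k i %% 3 = 2.
Proof. rewrite /off; lia. Qed.

Definition ucond k i r s := ((r + s < 18*k+12) && Pb k i (r+s)) || ((18*k+12 <= r+s) && Pb k i.+1 (r+s-(18*k+12))).

Lemma up_class k i r s : 0 < k -> r < 18*k+12 -> Pb k i r ->
  (s == 6*k+5) || (s == 9*k+6) || (s == 9*k+7) -> ucond k i r s.
Proof.
move=> hk hr hP hs; rewrite /ucond; case: (ltnP (r+s) (18*k+12)) => e;
 [apply/orP; left|apply/orP; right]; apply/andP; split=> //; move: hP hs; rewrite /Pb /Rb; lia.
Qed.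

Lemma ge_a k x : Hb k x -> x != 0 -> 6*k+5 <= x.
Proof. move=> hx hx0; case: (leqP (6*k+5) x) => // h; move: hx; rewrite small //; lia. Qed.

Definition Sc k s := (s == 6*k+5) || (s == 9*k+6) || (s == 9*k+7).

Lemma down k x : 0 < k -> Hb k x -> x != 0 -> exists2 s, Sc k s & (s <= x) && Hb k (x - s).
Proof.
move=> hk hx hx0; have ha := ge_a hx hx0.
have [i /andP[h1 h2]] := locate ha.
move: hx; rewrite (memb h1 h2) => hP.
have hr : x - off k i < 18*k+12 by lia.
have [s hs hd] := down_class hk hr hP.
exists s => //.
move: hd; rewrite /dcond => /orP[/orP[/andP[e1 e2]|/andP[/andP[e1 e0] e2]]|e3].
- rewrite (@memb k i (x - s)); [|lia|lia].
  have -> : x - s - off k i = x - off k i - s by lia.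
  rewrite e2 andbT; lia.
- have o := offS k i.-1; rewrite prednK // in o.
  rewrite (@memb k i.-1 (x - s)); [|lia|lia].
  have -> : x - s - off k i.-1 = x - off k i + (18*k+12) - s by lia.
  rewrite e2 andbT; lia.
- have o := off0 k.
  move: e3 => /andP[/andP[e4 /eqP hi0] e5]; subst i.
  have -> : x - s = 0 by move: hs; rewrite /Sc; lia.
  rewrite /Hb eqxx /= andbT; move: hs; rewrite /Sc; lia.
Qed.

Lemma up k x s : 0 < k -> Hb k x -> Sc k s -> Hb k (x + s).
Proof.
move=> hk hx hs; case: (eqVneq x 0) => [->|hx0].
  rewrite add0n (@memb k 0 s); have o := off0 k; move: hs; rewrite /Sc /Pb /Rb; lia.
have ha := ge_a hx hx0.
have [i /andP[h1 h2]] := locate ha.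
move: hx; rewrite (memb h1 h2) => hP.
have hr : x - off k i < 18*k+12 by lia.
have := up_class hk hr hP hs; rewrite /ucond => /orP[/andP[e1 e2]|/andP[e1 e2]].
- rewrite (@memb k i (x + s)); [|lia|lia].
  by have -> : x + s - off k i = x - off k i + s by lia.
- have o := offS k i; move: hs; rewrite /Sc => hs.
  rewrite (@memb k i.+1 (x + s)); [|lia|lia].
  by have -> : x + s - off k i.+1 = x - off k i + s - (18*k+12) by lia.
Qed.

Lemma Hb0 k : Hb k 0. Proof. by rewrite /Hb eqxx. Qed.

Lemma addH k x y : 0 < k -> Hb k x -> Hb k y -> Hb k (x + y).
Proof.
move=> hk hx; elim/ltn_ind: y => y IH hy.
case: (eqVneq y 0) => [->|hy0]; first by rewrite addn0.
have [s hs /andP[hsy hys]] := down hk hy hy0.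
have s0 : 0 < s by move: hs; rewrite /Sc; lia.
have := IH (y - s) ltac:(lia) hys.
move/(up hk)/(_ hs); by rewrite -addnA subnK.
Qed.

Lemma gen_iff k (Q : nat -> Prop) : 0 < k -> (forall s, Q s <-> Sc k s) ->
  forall x, H13 k x <-> generated Q x.
Proof.
move=> hk hQ x; split.
- move/HbP; elim/ltn_ind: x => x IH hx M hM MQ; case: (hM) => M0 MD.
  case: (eqVneq x 0) => [->//|hx0].
  have [s hs /andP[hsx hxs]] := down hk hx hx0.
  have s0 : 0 < s by move: hs; rewrite /Sc; lia.
  rewrite -(subnK hsx); apply: (MD).
  + exact: (IH (x - s) ltac:(lia) hxs M hM MQ).
  + by apply: MQ; apply/hQ.
- move=> hg; apply: hg.
  + split; first by apply/HbP; exact: Hb0.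
    by move=> a b /HbP ha /HbP hb; apply/HbP; exact: addH.
  + move=> s /hQ hs; apply/HbP; have := up hk (Hb0 k) hs; by rewrite add0n.
Qed.

Lemma SofE k s : S_of k s <-> Sc k s.
Proof. rewrite /S_of /Sc aE bE cE; split=> h; lia. Qed.

Definition psi k x := if C_k k x then 0 else if x < 6*k+5 then 0 else
  if (x - (6*k+5)) %% (18*k+12) < 6*k+5 then 1 else
  if (x - (6*k+5)) %% (18*k+12) < 12*k+7 then 0 else 2.

Definition ph k x := (x + 2 * psi k x) %% 3.

Lemma psi_le2 k x : psi k x <= 2.
Proof. rewrite /psi; case: ifP => // _; case: ifP => // _; case: ifP => // _; case: ifP => //. Qed.

Lemma psi0 k : psi k 0 = 0.
Proof. rewrite /psi; case: ifP => // _; case: ifP => // h; lia. Qed.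

Lemma Cblock k i x : off k i <= x -> x < off k i + (18*k+12) ->
  C_k k x = (k < i) || ((i == k) && (6*k+5 <= x - off k i)).
Proof.
move=> h1 h2; rewrite CkE.
have f1 : i < k -> i*k + k <= k*k by apply: mulf.
have f2 : k < i -> k*k + k <= i*k by apply: mulf.
have f3 : i = k -> i*k = k*k by move->.
apply/idP/idP; move: h1 h2; rewrite /off; lia.
Qed.

Lemma psi_spec k i x : off k i <= x -> x < off k i + (18*k+12) ->
  [|| (psi k x == 0) && ((k < i) || ((i == k) && (6*k+5 <= x - off k i)) || ((6*k+5 <= x - off k i) && (x - off k i < 12*k+7))),
      (psi k x == 1) && ~~ ((k < i) || ((i == k) && (6*k+5 <= x - off k i))) && (x - off k i < 6*k+5)
    | (psi k x == 2) && ~~ ((k < i) || ((i == k) && (6*k+5 <= x - off k i))) && (12*k+7 <= x - off k i)].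
Proof.
move=> h1 h2.
have e : (x - (6*k+5)) %% (18*k+12) = x - off k i.
  have -> : x - (6*k+5) = i * (18*k+12) + (x - off k i) by move: h1 h2; rewrite /off; lia.
  rewrite modnMDl modn_small //; lia.
have ha : 6*k+5 <= x by move: h1; rewrite /off; lia.
rewrite /psi e (Cblock h1 h2) (leq_gtF ha).
case: ifP => c1; first lia.
case: ifP => c2; first lia.
case: ifP => c3; lia.
Qed.

Lemma ex_next k x : exists y, (x < y) && Hb k y.
Proof.
exists (x.+1 + (2*a_of k + 2*k*b_of k)); apply/andP; split; first lia.
by apply/orP; right; rewrite /C_k; lia.
Qed.

Definition nextH k x := ex_minn (ex_next k x).

Lemma nextP k x : [/\ x < nextH k x, Hb k (nextH k x) & forall z, x < z -> Hb k z -> nextH k x <= z].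
Proof.
rewrite /nextH; case: ex_minnP => m /andP[h1 h2] hmin; split=> // z hz hbz.
by apply: hmin; rewrite hz hbz.
Qed.

Lemma next_eq k x y : x < y -> Hb k y -> (forall z, x < z -> z < y -> ~~ Hb k z) -> nextH k x = y.
Proof.
move=> hxy hy gap; have [h1 h2 h3] := nextP k x.
apply/eqP; rewrite eqn_leq h3 //=.
case: (leqP y (nextH k x)) => // hlt.
by have := gap _ h1 hlt; rewrite h2.
Qed.

Lemma next0 k : 0 < k -> nextH k 0 = 6*k+5.
Proof.
move=> hk; have o := off0 k; apply: next_eq; [lia| |move=> z h1 h2; rewrite small //; lia].
rewrite (@memb k 0 (6*k+5)); [|lia|lia]; move: o; rewrite /Pb /Rb; lia.
Qed.

Ltac go k i x y0 j h1 h2 :=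
  let E := fresh "E" in
  have E : nextH k x = y0; [apply: next_eq; [lia | rewrite (@memb k j y0); [rewrite /Pb /Rb; lia|lia|lia]
     | let z := fresh "z" in move=> z hz1 hz2; rewrite (@memb k i z); [rewrite /Pb /Rb; lia|lia|lia]] | ];
  rewrite E; have s1 := @psi_spec k i x h1 h2; have s2 := @psi_spec k j y0 ltac:(lia) ltac:(lia);
  have o3 := off3 k i; have o4 := off3 k j; rewrite /ph; lia.

Lemma local k x : 0 < k -> Hb k x ->
  (ph k (nextH k x) == (ph k x).+1 %% 3) && ((psi k (nextH k x) == psi k x) || (ph k x == 0)).
Proof.
move=> hk hx; case: (eqVneq x 0) => [->|hx0].
  rewrite (next0 hk) /ph psi0; have o := off0 k.
  have := @psi_spec k 0 (6*k+5) ltac:(lia) ltac:(lia); lia.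
have ha := ge_a hx hx0.
have [i /andP[h1 h2]] := locate ha.
case: (boolP (C_k k x)) => hC.
  have hC1 : C_k k x.+1 by move: hC; rewrite !CkE; lia.
  have E : nextH k x = x.+1.
  { apply: next_eq; [lia | by rewrite /Hb hC1 orbT | move=> z; lia]. }
  rewrite E /ph /psi hC hC1; lia.
move: hx; rewrite (memb h1 h2) /Pb /Rb => hP.
move: hC; rewrite (Cblock h1 h2) => hC.
have o5 := offS k i.
move: hP => /orP[/orP[h|h]|/andP[hik /orP[/orP[/orP[/orP[/orP[h|h]|h]|h]|h]|h]]].
- by move: hC h; lia.
- by move: hC h; lia.
- case: (ltnP (x - off k i) (3*i)) => e;
    [go k i x x.+1 i h1 h2 | go k i x (off k i + (3*k+1)) i h1 h2].
- case: (ltnP (x - off k i) (3*k+2+3*i)) => e;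
    [go k i x x.+1 i h1 h2 | go k i x (off k i + (6*k+5)) i h1 h2].
- case: (ltnP (x - off k i) (6*k+5+3*i)) => e;
    [go k i x x.+1 i h1 h2 | go k i x (off k i + (9*k+6)) i h1 h2].
- case: (ltnP (x - off k i) (9*k+7+3*i)) => e;
    [go k i x x.+1 i h1 h2 | go k i x (off k i + (12*k+7)) i h1 h2].
- case: (ltnP (x - off k i) (12*k+10+3*i)) => e;
    [go k i x x.+1 i h1 h2 | go k i x (off k i + (15*k+11)) i h1 h2].
- case: (ltnP (x - off k i) (15*k+12+3*i)) => e;
    [go k i x x.+1 i h1 h2 | go k i x (off k i.+1) i.+1 h1 h2].
Qed.

Fixpoint gg k n := if n is n'.+1 then nextH k (gg k n') else 0.

Lemma gg_in k n : Hb k (gg k n).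
Proof. elim: n => [|n IH] /=; first exact: Hb0. by case: (nextP k (gg k n)). Qed.

Lemma gg_lt k n : gg k n < gg k n.+1.
Proof. by case: (nextP k (gg k n)). Qed.

Lemma gg_mono k i j : i < j -> gg k i < gg k j.
Proof.
elim: j => // j IH; rewrite ltnS leq_eqVlt => /orP[/eqP->|h]; first exact: gg_lt.
exact: ltn_trans (IH h) (gg_lt k j).
Qed.

Lemma gg_ge k n : n <= gg k n.
Proof. elim: n => // n IH; have := gg_lt k n; lia. Qed.

Lemma gg_surj k x : Hb k x -> exists n, gg k n = x.
Proof.
move=> hx; suff: forall n, x <= gg k n -> exists m, gg k m = x by apply; exact: gg_ge.
elim=> [|n IH] h.
  by exists 0; move: h; rewrite /= leqn0 => /eqP.
case: (leqP x (gg k n)) => h'; first exact: IH.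
exists n.+1; move: h => /= h.
have [_ _ hm] := nextP k (gg k n).
have := hm x h' hx; lia.
Qed.

Lemma ph_gg k n : 0 < k -> ph k (gg k n) = n %% 3.
Proof.
move=> hk; elim: n => [|n IH] /=; first by rewrite /ph psi0.
have := local hk (gg_in k n); rewrite IH; lia.
Qed.

Lemma psi_gg k n : 0 < k -> (psi k (gg k n.+1) == psi k (gg k n)) || (n %% 3 == 0).
Proof. move=> hk; have := local hk (gg_in k n); rewrite ph_gg //=; lia. Qed.

Lemma gg_res k m j : 0 < k -> 0 < j <= 3 ->
  gg k (m*3+j) %% 3 = (j + psi k (gg k (m*3+1))) %% 3.
Proof.
move=> hk hj.
have p1 := psi_gg (m*3+1) hk. have p2 := psi_gg (m*3+2) hk.
have q1 := ph_gg (m*3+1) hk. have q2 := ph_gg (m*3+2) hk. have q3 := ph_gg (m*3+3) hk.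
move: p1 p2 q1 q2 q3; rewrite /ph -!addnS /=.
have l1 := psi_le2 k (gg k (m*3+1)).
case/andP: hj => hj1 hj2.
case: j hj1 hj2 => [//|[|[|[|j]]]] _ hj2 //; lia.
Qed.

Lemma gg123 k : 0 < k -> [/\ gg k 1 = 6*k+5, gg k 2 = 9*k+6 & gg k 3 = 9*k+7].
Proof.
move=> hk; have o := off0 k.
have e1 : gg k 1 = 6*k+5 by rewrite /= next0.
have e2 : gg k 2 = 9*k+6.
  rewrite /= -/(gg k 1) e1; apply: next_eq; first lia.
    rewrite (@memb k 0 (9*k+6)); [|lia|lia]; move: o; rewrite /Pb /Rb; lia.
  move=> z h1 h2; rewrite (@memb k 0 z); [|lia|lia]; move: o; rewrite /Pb /Rb; lia.
have e3 : gg k 3 = 9*k+7.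
  rewrite /= -/(gg k 2) e2; apply: next_eq; first lia.
    rewrite (@memb k 0 (9*k+7)); [|lia|lia]; move: o; rewrite /Pb /Rb; lia.
  move=> z h1 h2; lia.
by [].
Qed.

Theorem lemma4p13 (k : nat) (hk : 0 < k) :
  (submonoid (H13 k) /\ cofinite (H13 k) /\
   (forall x, H13 k x -> generated (S_of k) x) /\
   (forall s, S_of k s -> H13 k s))
  /\ perm_num_semigroup 3 (H13 k).
Proof.
have hsm : submonoid (H13 k).
  split; first by apply/HbP; exact: Hb0.
  by move=> a b /HbP ha /HbP hb; apply/HbP; exact: addH.
have hcf : cofinite (H13 k).
  by exists (2 * a_of k + 2 * k * b_of k) => x hx; right; right.
split.
  split=> //; split=> //; split.
  - by move=> x hx; exact: (proj1 (gen_iff hk (@SofE k) x) hx).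
  - move=> s /SofE hs; apply/HbP; have := up hk (Hb0 k) hs; by rewrite add0n.
split; first by split.
have [g1 g2 g3] := gg123 hk.
exists (gg k); split; [split|split].
- by move=> i j; exact: gg_mono.
- move=> x; split; first by move/HbP/gg_surj.
  by case=> i <-; apply/HbP; exact: gg_in.
- apply: gen_iff => // s; split.
  + case=> j /andP[hj1 hj2] <-; rewrite /Sc.
    case: j hj1 hj2 => [//|[|[|[|j]]]] _ hj2 //; rewrite ?g1 ?g2 ?g3; lia.
  + rewrite /Sc => /orP[/orP[/eqP->|/eqP->]|/eqP->].
    * by exists 1; rewrite // g1.
    * by exists 2; rewrite // g2.
    * by exists 3; rewrite // g3.
- move=> m /=.
  rewrite (gg_res m (j:=1) hk) // (gg_res m (j:=2) hk) // (gg_res m (j:=3) hk) //.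
  have := psi_le2 k (gg k (m*3+1)).
  case: (psi k (gg k (m*3+1))) => [|[|[|p]]] // _.
Qed.
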